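(* For every positive integer $n$ and every function $\sigma\colon E(K_{4n})\to\{-1,1\}$ with $\left|\sigma\left(E(K_{4n})\right)\right|<n^2+11n+2$, there is a perfect matching $M$ in $K_{4n}$ with $|\sigma(M)|\leq 2$.
   Context: $K_{4n}$ denotes the complete graph on $4n$ vertices and $E(K_{4n})$ its edge set. For a set $F$ of edges, $\sigma(F)=\sum_{e\in F}\sigma(e)$. *)

(* Defs.v *)
From mathcomp Require Import all_boot all_order all_algebra.
Set Implicit Arguments. Unset Strict Implicit. Unset Printing Implicit Defensive.
Import Order.TTheory GRing.Theory Num.Theory.

(* The complete graph K_m on vertex set 'I_m: its edges are the 2-element
   subsets of 'I_m. *)
Definition is_edge (m : nat) (e : {set 'I_m}) : bool := #|e| == 2.

(* A signing sigma : E(K_m) -> {-1,1}; represented as a function on all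
   subsets, constrained only on edges. *)
Definition is_signing (m : nat) (sigma : {set 'I_m} -> int) : Prop :=
  forall e : {set 'I_m}, is_edge e -> sigma e = 1%R \/ sigma e = (-1)%R.

Definition sigma_sum (m : nat) (sigma : {set 'I_m} -> int)
  (F : {set {set 'I_m}}) : int := (\sum_(e in F) sigma e)%R.

Definition edges_K (m : nat) : {set {set 'I_m}} := [set e | is_edge e].

Definition perfect_matching (m : nat) (M : {set {set 'I_m}}) : Prop :=
  (forall e, e \in M -> is_edge e) /\
  (forall v : 'I_m, #|[set e in M | v \in e]| = 1%N).

(* Main.v *)
Require Import Defs.
From mathcomp Require Import all_boot all_order all_algebra all_fingroup.
From mathcomp Require Import zify.
From Stdlib Require Import Classical.
Import Order.TTheory GRing.Theory Num.Theory.
Set Implicit Arguments. Unset Strict Implicit. Unset Printing Implicit Defensive.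

Definition isinv N (p : 'I_N -> 'I_N) := (forall x, p (p x) = x) /\ (forall x, p x != x).

Definition swp N (p : 'I_N -> 'I_N) (v a : 'I_N) : 'I_N -> 'I_N :=
  fun x => if x == v then a else if x == a then v else
           if x == p v then p a else if x == p a then p v else p x.

Lemma isinv_inj N (p : 'I_N -> 'I_N) : isinv p -> injective p.
Proof. by case=> h _; apply: (can_inj h). Qed.

Lemma swp_facts N (p : 'I_N -> 'I_N) v a : isinv p -> v != a -> a != p v ->
  [/\ p v != v, p a != a, p a != v, p a != p v & p v != a].
Proof.
move=> [h1 h2] va apv; split; rewrite ?h2 //.
- apply/eqP=> e; move/eqP: apv; apply; by rewrite -e h1.
- apply/eqP=> e; have := congr1 p e; rewrite !h1 => e'; by move/eqP: va; rewrite e'.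
- by rewrite eq_sym.
Qed.

Lemma swp_inv N (p : 'I_N -> 'I_N) v a : isinv p -> v != a -> a != p v ->
  isinv (swp p v a).
Proof.
move=> ip va apv; have [f1 f2 f3 f4 f5] := swp_facts ip va apv.
case: ip => h1 h2.
have g7 : (p v == a) = false by apply/negbTE.
split=> x; rewrite /swp.
- case: (eqVneq x v) => [->|xv]; first by rewrite eqxx eq_sym (negPf va).
  case: (eqVneq x a) => [->|xa]; first by rewrite eqxx.
  case: (eqVneq x (p v)) => [->|xc].
    by rewrite (negPf f3) (negPf f2) (negPf f4) eqxx.
  case: (eqVneq x (p a)) => [->|xb].
    by rewrite (negPf f1) (negPf f5) eqxx.
  have e1 : p x != v by apply: contra xc => /eqP <-; rewrite h1.
  have e2 : p x != a by apply: contra xb => /eqP <-; rewrite h1.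
  have e3 : p x != p v by apply: contra xv => /eqP e; apply/eqP; exact: (isinv_inj (conj h1 h2) e).
  have e4 : p x != p a by apply: contra xa => /eqP e; apply/eqP; exact: (isinv_inj (conj h1 h2) e).
  by rewrite (negPf e1) (negPf e2) (negPf e3) (negPf e4) h1.
- case: (eqVneq x v) => [->|xv]; first by rewrite eq_sym.
  case: (eqVneq x a) => [->|xa]; first by [].
  case: (eqVneq x (p v)) => [->|xc]; first by [].
  case: (eqVneq x (p a)) => [->|xb]; first by rewrite eq_sym.
  by rewrite h2.
Qed.

Definition Vs N (s : 'I_N -> 'I_N -> int) (p : 'I_N -> 'I_N) : int :=
  (\sum_x s x (p x))%R.
Definition dis N (p q : 'I_N -> 'I_N) := #|[set x | p x != q x]|.
Definition sgn_ok N (s : 'I_N -> 'I_N -> int) :=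
  forall x y, x != y -> s x y = 1%R \/ s x y = (-1)%R.

Lemma swp_V N (s : 'I_N -> 'I_N -> int) p v a : sgn_ok s -> isinv p -> v != a -> a != p v ->
  (`|Vs s (swp p v a) - Vs s p| <= 8)%R.
Proof.
move=> hs ip va apv; have ip' := swp_inv ip va apv.
rewrite /Vs -sumrB.
apply: (le_trans (ler_norm_sum _ _ _)).
apply: (@le_trans _ _ (\sum_x (if x \in [:: v; a; p v; p a] then 2 else 0))%R).
  apply: ler_sum => x _.
  case: ifP => hx.
    have h1 : x != swp p v a x by rewrite eq_sym; case: ip' => _ ->.
    have h2 : x != p x by rewrite eq_sym; case: ip => _ ->.
    by case: (hs _ _ h1) => ->; case: (hs _ _ h2) => ->.
  move: hx; rewrite !inE /swp => /norP [xv /norP [xa /norP [xc xb]]].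
  by rewrite (negPf xv) (negPf xa) (negPf xc) (negPf xb) subrr normr0.
rewrite -big_mkcond /= sumr_const.
have := card_size [:: v; a; p v; p a] => /= hc.
move: hc; set m := #|_|; move=> hc.
rewrite -mulr_natr. lia.
Qed.

Lemma swp_dis N (p q : 'I_N -> 'I_N) v : isinv p -> isinv q -> p v != q v ->
  dis (swp p v (q v)) q < dis p q.
Proof.
move=> ip iq pq.
have va : v != q v by rewrite eq_sym; case: iq => _ ->.
have apv : q v != p v by rewrite eq_sym.
have [f1 f2 f3 f4 f5] := swp_facts ip va apv.
case: ip => h1 h2; case: iq => k1 k2.
rewrite /dis (cardsD1 v [set x | p x != q x]) inE pq add1n ltnS.
apply: subset_leq_card; apply/subsetP => x; rewrite !inE /swp.
case: (eqVneq x v) => [->|xv]; first by rewrite eqxx.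
case: (eqVneq x (q v)) => [->|xa]; first by rewrite k1 eqxx.
case: (eqVneq x (p v)) => [->|xc].
  move=> _; rewrite h1 /=; apply/eqP => e.
  have := congr1 q e; rewrite k1 => e'; by move/eqP: pq; rewrite -e'.
case: (eqVneq x (p (q v))) => [->|xb].
  move=> _; rewrite h1 /=; apply/eqP => e.
  have := congr1 q e; rewrite !k1 => e'. by move/eqP: f3; rewrite -e'.
by [].
Qed.

Lemma interp N (s : 'I_N -> 'I_N -> int) : sgn_ok s -> forall m p q, dis p q <= m ->
  isinv p -> isinv q -> (Vs s p <= -5)%R -> (-4 <= Vs s q)%R ->
  exists r, isinv r /\ (`|Vs s r| <= 4)%R.
Proof.
move=> hs; elim=> [|m IH] p q hd ip iq hp hq.
  have e : Vs s p = Vs s q.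
    apply: eq_bigr => x _; congr (s x _); apply/eqP.
    move: hd; rewrite leqn0 /dis cards_eq0 => /eqP/setP/(_ x).
    by rewrite !inE => /negbFE.
  by move: hp hq; rewrite e; lia.
case: (pickP [pred x | p x != q x]) => [v /= pv|h0]; last first.
  have e : Vs s p = Vs s q.
    apply: eq_bigr => x _; congr (s x _); apply/eqP.
    by move: (h0 x) => /= /negbFE.
  by move: hp hq; rewrite e; lia.
have va : v != q v by rewrite eq_sym; case: iq => _ ->.
have apv : q v != p v by rewrite eq_sym.
have ip' := swp_inv ip va apv.
have hd' := swp_dis ip iq pv.
have hV := swp_V hs ip va apv.
case: (lerP (Vs s (swp p v (q v))) (-5)%R) => h5.
  apply: (IH _ q _ ip' iq h5 hq); by rewrite -ltnS (leq_trans hd').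
exists (swp p v (q v)); split=> //.
move: hV h5 hp; rewrite !ler_norml; lia.
Qed.

Definition fcan (m x : nat) := if x < m then m.-1 - x else if odd x then x.-1 else x.+1.

Lemma fcan_lt N m x : ~~ odd N -> m <= N -> x < N -> fcan m x < N.
Proof. move=> *; rewrite /fcan; repeat case: ifP => ?; lia. Qed.

Lemma fcan_inv m x : ~~ odd m -> fcan m (fcan m x) = x.
Proof.
rewrite /fcan => hm; case: (ltnP x m) => h1.
  have -> : m.-1 - x < m by lia. lia.
case: (boolP (odd x)) => ho.
  have -> : (x.-1 < m) = false by lia.
  have -> : odd x.-1 = false by lia. lia.
have -> : (x.+1 < m) = false by lia.
have -> : odd x.+1 = true by rewrite /= ho. done.
Qed.

Lemma fcan_neq m x : ~~ odd m -> fcan m x != x.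
Proof. move=> *; rewrite /fcan; repeat case: ifP => ?; lia. Qed.

Lemma canon_inv N m : ~~ odd N -> ~~ odd m -> m <= N ->
  exists p : 'I_N -> 'I_N, isinv p /\ forall x : 'I_N, val (p x) = fcan m x.
Proof.
move=> hN hm hmN.
exists (fun x : 'I_N => insubd x (fcan m x)).
have hv : forall x : 'I_N, val (insubd x (fcan m x)) = fcan m x.
  by move=> x; rewrite val_insubd fcan_lt.
split; last by [].
split=> x.
  apply: val_inj; rewrite hv hv; exact: fcan_inv.
apply/eqP => e; have := congr1 val e; rewrite hv => /eqP; by rewrite (negPf (fcan_neq _ hm)).
Qed.


Definition symg N (g : 'I_N -> 'I_N -> bool) := forall x y, g x y = g y x.

Definition shift N (g : 'I_N -> 'I_N -> bool) (i j : 'I_N) : 'I_N -> 'I_N -> bool :=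
  fun x y =>
  if x == i then (if y == j then g x y else g i y || g j y)
  else if y == i then (if x == j then g x y else g i x || g j x)
  else if x == j then g j y && g i y
  else if y == j then g j x && g i x
  else g x y.

Lemma shift_sym N (g : 'I_N -> 'I_N -> bool) i j : symg g -> i != j -> symg (shift g i j).
Proof.
move=> hg ij x y; rewrite /shift.
case: (eqVneq x i) => [?|xi]; case: (eqVneq y i) => [?|yi];
  case: (eqVneq x j) => [?|xj]; case: (eqVneq y j) => [?|yj]; subst; rewrite ?eqxx //=;
  try by rewrite ?eqxx ?(negPf ij) ?(negPf xi) ?(negPf yi) ?(negPf xj) ?(negPf yj) //= ?hg.
all: by move: ij; rewrite eqxx.
Qed.


Lemma shift_out N (g : 'I_N -> 'I_N -> bool) i j x y :
  x != i -> x != j -> y != i -> y != j -> shift g i j x y = g x y.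
Proof. by rewrite /shift => /negPf-> /negPf-> /negPf-> /negPf->. Qed.

Lemma shift_i N (g : 'I_N -> 'I_N -> bool) i j y :
  y != j -> shift g i j i y = g i y || g j y.
Proof. by rewrite /shift eqxx => /negPf->. Qed.

Lemma shift_j N (g : 'I_N -> 'I_N -> bool) i j y :
  i != j -> y != i -> y != j -> shift g i j j y = g j y && g i y.
Proof.
rewrite /shift => ij /negPf-> /negPf->; by rewrite eq_sym (negPf ij) eqxx.
Qed.

Lemma shift_ij N (g : 'I_N -> 'I_N -> bool) i j :
  shift g i j i j = g i j.
Proof. by rewrite /shift !eqxx. Qed.

Definition negc N (g : 'I_N -> 'I_N -> bool) (p : 'I_N -> 'I_N) := #|[set x | g x (p x)]|.

Lemma shift_ji N (g : 'I_N -> 'I_N -> bool) i j : symg g -> i != j ->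
  shift g i j j i = g i j.
Proof. by move=> hg ij; rewrite (shift_sym hg ij) shift_ij. Qed.

Lemma shift_hyp N (g : 'I_N -> 'I_N -> bool) i j K : symg g -> i != j ->
  (forall p, isinv p -> negc g p <= K) ->
  forall p, isinv p -> negc (shift g i j) p <= K.
Proof.
move=> hg ij H p ip; have hs := shift_sym hg ij.
have [h1 h2] := ip; have pinj := isinv_inj ip.
have ji : j != i by rewrite eq_sym.
case: (eqVneq (p i) j) => pij.
  apply: leq_trans (H p ip); apply: subset_leq_card; apply/subsetP => x; rewrite !inE.
  case: (eqVneq x i) => [->|xi]; first by rewrite pij shift_ij.
  case: (eqVneq x j) => [->|xj]; first by rewrite -pij h1 pij shift_ji // hg.
  rewrite shift_out //.
    by apply: contra xj => /eqP e; rewrite -pij -e h1.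
  by apply: contra xi => /eqP e; rewrite -(h1 i) pij -e h1.
set a := p i; set b := p j.
have ai : a != i by exact: h2.
have bj : b != j by exact: h2.
have bi : b != i by apply: contra pij => /eqP e; rewrite /a -e h1.
have ab : a != b by apply: contra ij => /eqP/pinj ->.
have hpa : p a = i by rewrite h1.
have hpb : p b = j by rewrite h1.
have hout : forall x, x != i -> x != j -> x != a -> x != b -> p x != i /\ p x != j.
  move=> x xi xj xa xb; split.
    by apply: contra xa => /eqP e; rewrite /a -e h1.
  by apply: contra xb => /eqP e; rewrite /b -e h1.
case: (boolP (g i a)) => gia.
  apply: leq_trans (H p ip); apply: subset_leq_card; apply/subsetP => x; rewrite !inE.
  case: (eqVneq x i) => [->|xi]; first by rewrite gia.
  case: (eqVneq x j) => [->|xj]; first by rewrite shift_j // => /andP[].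
  case: (eqVneq x a) => [->|xa]; first by rewrite hpa hg gia.
  case: (eqVneq x b) => [->|xb].
    by rewrite hpb hs shift_j // hg => /andP[].
  by have [u1 u2] := hout x xi xj xa xb; rewrite shift_out.
have bpi : b != p i by rewrite eq_sym.
have ib : i != b by rewrite eq_sym.
have ip' := swp_inv ip ib bpi.
apply: leq_trans (H _ ip').
rewrite /negc -(card_imset _ (@perm_inj _ (tperm i j))).
apply: subset_leq_card; apply/subsetP => y /imsetP [x]; rewrite !inE => hx ->.
have ja : j != a by rewrite eq_sym.
have jb : j != b by rewrite eq_sym.
have ia : i != a by rewrite eq_sym.
rewrite /swp.
case: (eqVneq x i) => [e|xi].
  rewrite e tpermL (negPf ji) (negPf jb) (negPf ja).
  have -> : (j == p b) = true by rewrite hpb eqxx.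
  move: hx; rewrite e shift_i; last by rewrite eq_sym.
  by rewrite (negbTE gia).
case: (eqVneq x j) => [e|xj].
  rewrite e tpermR eqxx.
  by move: hx; rewrite e shift_j // => /andP[].
case: (eqVneq x a) => [e|xa].
  rewrite e tpermD // (negPf ai) (negPf ab) /a eqxx.
  move: hx; rewrite e hpa hs shift_i; last by rewrite eq_sym.
  rewrite (negbTE gia) /= -/a hpb hg. done.
case: (eqVneq x b) => [e|xb].
  rewrite e tpermD // (negPf bi) eqxx.
  move: hx; rewrite e hpb hs shift_j // => /andP[_]; by rewrite hg.
have [u1 u2] := hout x xi xj xa xb.
rewrite tpermD; [|by rewrite eq_sym|by rewrite eq_sym].
rewrite (negPf xi) (negPf xb) (negPf xa).
have -> : (x == p b) = false by rewrite hpb (negPf xj).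
by move: hx; rewrite shift_out.
Qed.

Definition cnt N (g : 'I_N -> 'I_N -> bool) (x y : 'I_N) : nat := (x != y) && g x y.
Definition Dg N (g : 'I_N -> 'I_N -> bool) := \sum_x \sum_y cnt g x y.
Definition Phi N (g : 'I_N -> 'I_N -> bool) := \sum_x \sum_y cnt g x y * (x + y).

Lemma split2 N (F : 'I_N -> nat) i j : i != j ->
  \sum_x F x = F i + F j + \sum_(x | (x != i) && (x != j)) F x.
Proof.
move=> ij; rewrite (bigD1 i) //= (bigD1 j) /=; last by rewrite eq_sym.
by rewrite addnA.
Qed.

Lemma row_out N (g : 'I_N -> 'I_N -> bool) i j x : symg g -> i != j -> x != i -> x != j ->
  \sum_y cnt (shift g i j) x y = \sum_y cnt g x y /\
  (i < j -> \sum_y cnt (shift g i j) x y * (x + y) <= \sum_y cnt g x y * (x + y)).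
Proof.
move=> hg ij xi xj; have hs := shift_sym hg ij.
rewrite (split2 _ ij) [X in _ = X](split2 _ ij) (split2 (fun y => cnt _ x y * _) ij)
  (split2 (fun y => cnt g x y * _) ij).
have e1 : \sum_(y | (y != i) && (y != j)) cnt (shift g i j) x y =
          \sum_(y | (y != i) && (y != j)) cnt g x y.
  by apply: eq_bigr => y /andP[yi yj]; rewrite /cnt shift_out.
have e2 : \sum_(y | (y != i) && (y != j)) cnt (shift g i j) x y * (x + y) =
          \sum_(y | (y != i) && (y != j)) cnt g x y * (x + y).
  by apply: eq_bigr => y /andP[yi yj]; rewrite /cnt shift_out.
have xi' : i != x by rewrite eq_sym.
rewrite e1 e2 /cnt hs shift_i // hs (shift_j _ ij xi xj).
rewrite xi xj /= (hg x i) (hg x j).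
split; first by case: (g i x); case: (g j x).
move=> lij.
by case: (g i x); case: (g j x) => //=; lia.
Qed.

Lemma rows_ij N (g : 'I_N -> 'I_N -> bool) i j y : symg g -> i != j ->
  [/\ cnt (shift g i j) i y + cnt (shift g i j) j y = cnt g i y + cnt g j y,
   (i < j -> cnt (shift g i j) i y * (i + y) + cnt (shift g i j) j y * (j + y)
     <= cnt g i y * (i + y) + cnt g j y * (j + y)) &
   (i < j -> y != i -> y != j -> g j y -> ~~ g i y ->
     cnt (shift g i j) i y * (i + y) + cnt (shift g i j) j y * (j + y)
     < cnt g i y * (i + y) + cnt g j y * (j + y))].
Proof.
move=> hg ij; have ji : j != i by rewrite eq_sym.
rewrite /cnt.
case: (eqVneq y i) => [->|yi].
  by rewrite (shift_ji hg ij) ji hg; split.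
case: (eqVneq y j) => [->|yj].
  by rewrite shift_ij; split.
have iy : i != y by rewrite eq_sym.
have jy : j != y by rewrite eq_sym.
rewrite shift_i // shift_j // /=.
split; first by case: (g i y); case: (g j y).
  move=> lij; by case: (g i y); case: (g j y) => //=; lia.
move=> lij _ _ -> /negbTE ->; rewrite /=; lia.
Qed.

Lemma Dg_shift N (g : 'I_N -> 'I_N -> bool) i j : symg g -> i != j ->
  Dg (shift g i j) = Dg g.
Proof.
move=> hg ij; rewrite /Dg (split2 _ ij) [RHS](split2 _ ij).
congr (_ + _).
  rewrite -!big_split /=; apply: eq_bigr => y _.
  by case: (rows_ij y hg ij).
apply: eq_bigr => x /andP[xi xj]; by case: (row_out hg ij xi xj).
Qed.

Lemma Phi_shift N (g : 'I_N -> 'I_N -> bool) (i j y0 : 'I_N) : symg g -> i < j ->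
  y0 != i -> y0 != j -> g j y0 -> ~~ g i y0 ->
  Phi (shift g i j) < Phi g.
Proof.
move=> hg lij y0i y0j h1 h2.
have ij : i != j by rewrite neq_ltn lij.
rewrite /Phi (split2 _ ij) [X in _ < X](split2 _ ij).
have r1 : \sum_(x | (x != i) && (x != j)) \sum_y cnt (shift g i j) x y * (x + y) <=
          \sum_(x | (x != i) && (x != j)) \sum_y cnt g x y * (x + y).
  apply: leq_sum => x /andP[xi xj]; case: (row_out hg ij xi xj) => _; exact.
have r2 : \sum_y cnt (shift g i j) i y * (i + y) + \sum_y cnt (shift g i j) j y * (j + y) <
          \sum_y cnt g i y * (i + y) + \sum_y cnt g j y * (j + y).
  rewrite -!big_split /= (bigD1 y0) //= [X in _ < X](bigD1 y0) //=.
  have a1 := rows_ij y0 hg ij; case: a1 => _ _ /(_ lij y0i y0j h1 h2) a1.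
  have a2 : \sum_(y | y != y0) (cnt (shift g i j) i y * (i + y) + cnt (shift g i j) j y * (j + y))
     <= \sum_(y | y != y0) (cnt g i y * (i + y) + cnt g j y * (j + y)).
    apply: leq_sum => y _; case: (rows_ij y hg ij) => _ /(_ lij) ? _; done.
  by rewrite -addSn; apply: leq_add.
lia.
Qed.

Lemma sumb_card (T : finType) (P : pred T) : \sum_x (P x : nat) = #|[set x | P x]|.
Proof.
rewrite -sum1dep_card [RHS]big_mkcond; apply: eq_bigr => x _; by case: (P x).
Qed.

Lemma card_lt N c : c <= N -> #|[set x : 'I_N | x < c]| = c.
Proof.
move=> hc; rewrite -sumb_card.
rewrite -(big_mkord xpredT (fun x => (x < c : nat))) (@big_cat_nat _ _ _ c 0 N _ _ (leq0n c) hc) /=.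
rewrite (@eq_big_nat _ _ _ 0 c _ (fun _ => 1)); last by move=> x /andP[_ ->].
rewrite (@eq_big_nat _ _ _ c N _ (fun _ => 0)); last by move=> x /andP[h _]; rewrite ltnNge h.
by rewrite !sum_nat_const_nat muln0 muln1 addn0 subn0.
Qed.

Lemma down1 N (g : 'I_N -> 'I_N -> bool) :
  (forall i j y : 'I_N, i < j -> y != i -> y != j -> g j y -> g i y) ->
  forall x y x' : 'I_N, x' <= x -> x' != y -> x != y -> g x y -> g x' y.
Proof.
move=> hsh x y x' h1 h2 h3 h4.
case: (eqVneq x' x) => [-> //|ne].
apply: (hsh x' x) => //; first by rewrite ltn_neqAle ne.
  by rewrite eq_sym.
by rewrite eq_sym.
Qed.

Lemma down2 N (g : 'I_N -> 'I_N -> bool) : symg g ->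
  (forall i j y : 'I_N, i < j -> y != i -> y != j -> g j y -> g i y) ->
  forall x y x' y' : 'I_N, x' <= x -> y' <= y -> x != y -> x' != y' -> g x y -> g x' y'.
Proof.
move=> hg hsh x y x' y' h1 h2 h3 h4 h5.
case: (eqVneq x' y) => [e|ne].
  subst y.
  have xy' : x != y'.
    apply/eqP => e; move: h2 h1 h3 h4; rewrite -e => h2 h1 h3 h4.
    have : nat_of_ord x' = nat_of_ord x by lia.
    by move/ord_inj => e'; move: h3; rewrite e' eqxx.
  have h6 : g y' x.
    apply: (down1 hsh h2); [by rewrite eq_sym | by rewrite eq_sym | by rewrite hg].
  rewrite hg in h6; apply: (down1 hsh h1 h4 xy' h6).
have := down1 hsh h1 ne h3 h5; rewrite hg => h6.
rewrite hg; apply: (down1 hsh h2) => //; by rewrite eq_sym.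
Qed.

Lemma row_le N (g : 'I_N -> 'I_N -> bool) x (P : pred 'I_N) :
  (forall y, cnt g x y <= P y) -> \sum_y cnt g x y <= #|[set y | P y]|.
Proof. move=> h; rewrite -sumb_card; exact: leq_sum. Qed.

Lemma arith_b k tt N : tt <= k -> N = 4 * k + 8 ->
  (tt - 0) * N.-1 + ((2 * k + 1 - tt - tt) * (2 * k + 1 - tt).-1 + (N - (2 * k + 1 - tt)) * tt)
  <= 7 * k ^ 2 + 15 * k.
Proof. move=> h ->. rewrite subn0.
have -> : (4 * k + 8).-1 = 4 * k + 7 by lia.
have -> : (2 * k + 1 - tt).-1 = 2 * k - tt by lia.
have -> : (2 * k + 1 - tt - tt) = 2 * k + 1 - 2 * tt by lia.
have -> : 4 * k + 8 - (2 * k + 1 - tt) = 2 * k + 7 + tt by lia.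
nia. Qed.

Lemma shifted_bound N k (g : 'I_N -> 'I_N -> bool) : N = 4 * k + 8 -> symg g ->
  (forall i j y : 'I_N, i < j -> y != i -> y != j -> g j y -> g i y) ->
  (forall p, isinv p -> negc g p <= 2 * k + 1) -> Dg g <= 7 * k ^ 2 + 15 * k.
Proof.
move=> hN hg hsh H.
have [p0 [ip0 hp0]] : exists p0 : 'I_N -> 'I_N, isinv p0 /\ forall x : 'I_N, val (p0 x) = fcan (2 * k + 2) x.
  apply: canon_inv; rewrite ?hN; lia.
have [h01 h02] := ip0.
have [t /andP [tk gt]] : exists t : 'I_N, (t <= k) && ~~ g t (p0 t).
  case: (pickP [pred t : 'I_N | (t <= k) && ~~ g t (p0 t)]) => [t ht|h0]; first by exists t.
  have := H p0 ip0; rewrite /negc.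
  have : [set x : 'I_N | x < 2 * k + 2] \subset [set x | g x (p0 x)].
    apply/subsetP => x; rewrite !inE => hx.
    case: (leqP x k) => hxk.
      by move: (h0 x); rewrite /= hxk /= => /negbFE.
    have ht : p0 x <= k by rewrite hp0 /fcan hx; lia.
    by move: (h0 (p0 x)); rewrite /= ht /= h01 hg => /negbFE.
  move/subset_leq_card; rewrite card_lt; last by rewrite hN; lia.
  lia.
have hu : val (p0 t) = 2 * k + 1 - t.
  rewrite hp0 /fcan; have -> : t < 2 * k + 2 by lia. lia.
set m := 2 * k + 1 - t.
have key : forall x y : 'I_N, x != y -> g x y -> (x < t) || (y < t) || ((x < m) && (y < m)).
  move=> x y xy gxy; apply/negPn/negP => hc.
  have ut : p0 t != t by apply: h02.
  have tu : t != p0 t by rewrite eq_sym.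
  case: (leqP m x) => hmx.
    have : g (p0 t) t.
      apply: (down2 hg hsh _ _ xy ut gxy); rewrite ?hu; lia.
    by rewrite hg (negbTE gt).
  have hmy : m <= y by lia.
  have : g t (p0 t).
    apply: (down2 hg hsh _ _ xy tu gxy); rewrite ?hu; lia.
  by rewrite (negbTE gt).
pose b (x : nat) := if x < t then N.-1 else if x < m then m.-1 else t.
have rows : forall x : 'I_N, \sum_y cnt g x y <= b x.
  move=> x; rewrite /b; case: ifP => hxt.
    apply: leq_trans (row_le (P := fun y => x != y) _) _.
      by move=> y; rewrite /cnt; case: eqP => //= _; case: (g x y).
    have -> : [set y | x != y] = [set~ x] by apply/setP => y; rewrite !inE eq_sym.
    by rewrite cardsC1 card_ord.
  case: ifP => hxm.
    apply: leq_trans (row_le (P := fun y => (y < m) && (y != x)) _) _.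
      move=> y; rewrite /cnt; case: (eqVneq x y) => //= xy; case: (boolP (g x y)) => //= gxy.
      have := key _ _ xy gxy; rewrite hxt /=; case/orP => h.
        by have -> : y < m by lia.
      by case/andP: h => _ ->.
    have -> : [set y : 'I_N | (y < m) && (y != x)] = [set y : 'I_N | y < m] :\ x.
      by apply/setP => y; rewrite !inE andbC.
    have := cardsD1 x [set y : 'I_N | y < m]; rewrite card_lt; last by lia.
    rewrite inE hxm; lia.
  apply: leq_trans (row_le (P := fun y => y < t) _) _; last by rewrite card_lt; lia.
  move=> y; rewrite /cnt; case: (eqVneq x y) => //= xy; case: (boolP (g x y)) => //= gxy.
  have := key _ _ xy gxy; rewrite hxt hxm /= orbF; by move=> ->.
apply: (@leq_trans (\sum_(x < N) b x)); first exact: leq_sum.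
rewrite -(big_mkord xpredT b).
have htm : t <= m by lia.
have hmN : m <= N by lia.
rewrite (@big_cat_nat _ _ _ t 0 N _ _ (leq0n t)) /=; last by lia.
rewrite (@big_cat_nat _ _ _ m t N _ _ htm hmN) /=.
rewrite (@eq_big_nat _ _ _ 0 t _ (fun _ => N.-1)); last by move=> x /andP[_ h]; rewrite /b h.
rewrite (@eq_big_nat _ _ _ t m _ (fun _ => m.-1)); last first.
  by move=> x /andP[h1 h2]; rewrite /b h2 ltnNge h1.
have e3 : \sum_(m <= i < N) b i = \sum_(m <= i < N) t.
  apply: eq_big_nat => x /andP[h1 h2]; rewrite /b.
  have -> : (x < t) = false by lia.
  have -> : (x < m) = false by lia. done.
rewrite e3.
rewrite !sum_nat_const_nat /m; move: (nat_of_ord t) tk hN => tt htk hNN; exact: arith_b.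
Qed.


Lemma EG N k (g : 'I_N -> 'I_N -> bool) : N = 4 * k + 8 -> symg g ->
  (forall p, isinv p -> negc g p <= 2 * k + 1) -> Dg g <= 7 * k ^ 2 + 15 * k.
Proof.
move=> hN; move: g.
suff : forall M (g : 'I_N -> 'I_N -> bool), Phi g < M -> symg g ->
  (forall p, isinv p -> negc g p <= 2 * k + 1) -> Dg g <= 7 * k ^ 2 + 15 * k.
  by move=> h g; exact: (h _ g (ltnSn _)).
elim=> [|M IH] g hM hg H; first by [].
case: (pickP [pred ijy : 'I_N * 'I_N * 'I_N |
   [&& ijy.1.1 < ijy.1.2, ijy.2 != ijy.1.1, ijy.2 != ijy.1.2,
       g ijy.1.2 ijy.2 & ~~ g ijy.1.1 ijy.2]]) => [[[i j] y]|h0].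
  move=> /and5P [lij yi yj h1 h2] /=.
  have ij : i != j by rewrite neq_ltn lij.
  rewrite -(Dg_shift hg ij).
  have hP := Phi_shift hg lij yi yj h1 h2.
  apply: (IH (shift g i j)).
  - by apply: leq_trans hP _.
  - exact: shift_sym.
  - exact: shift_hyp.
apply: (shifted_bound hN hg _ H) => i j y lij yi yj gjy.
apply/negPn/negP => gi.
by move: (h0 (i, j, y)); rewrite /= lij yi yj gjy gi.
Qed.


Lemma DC N (M : {set {set 'I_N}}) (F : {set 'I_N} -> int) :
  (forall e, e \in M -> #|e| = 2) ->
  (\sum_x \sum_(e in [set e in M | x \in e]) F e = 2 * \sum_(e in M) F e)%R.
Proof.
move=> hM.
have -> : (\sum_x \sum_(e in [set e in M | x \in e]) F e =
           \sum_x \sum_(e in M) (if x \in e then F e else 0))%R.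
  apply: eq_bigr => x _; rewrite -big_mkcondr /=.
  by apply: eq_bigl => e; rewrite !inE.
rewrite exchange_big /= mulr_sumr; apply: eq_bigr => e he.
rewrite -big_mkcond /= sumr_const hM // mulr2n mulrDl mul1r.
done.
Qed.

Lemma edges_x N (F : {set 'I_N} -> int) (x : 'I_N) :
  (\sum_(e in [set e in edges_K N | x \in e]) F e = \sum_(y in [set y | x != y]) F [set x; y])%R.
Proof.
have inj : {in [set y | x != y] &, injective (fun y => [set x; y])}.
  move=> y1 y2; rewrite !inE => h1 h2 e.
  have : y1 \in [set x; y2] by rewrite -e set22.
  rewrite in_set2 => /orP [/eqP e1|/eqP //]; by move: h1; rewrite e1 eqxx.
rewrite -(big_imset _ inj) /=; apply: eq_bigl => e.
apply/idP/idP.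
  rewrite !inE /edges_K /is_edge => /andP [he hx].
  case/cards2P: he => a [b [ab eab]]; subst e.
  move: hx; rewrite in_set2 => /orP [/eqP ->|/eqP ->].
    by apply/imsetP; exists b => //; rewrite inE.
  by apply/imsetP; exists a; rewrite ?inE 1?eq_sym // setUC.
case/imsetP => y; rewrite !inE => xy ->.
by rewrite /is_edge cards2 xy set21.
Qed.

Lemma sumE N (F : {set 'I_N} -> int) :
  (2 * \sum_(e in edges_K N) F e = \sum_x \sum_(y in [set y | x != y]) F [set x; y])%R.
Proof.
rewrite -DC; last by move=> e; rewrite inE /is_edge => /eqP.
by apply: eq_bigr => x _; rewrite edges_x.
Qed.

Definition Mp N (p : 'I_N -> 'I_N) : {set {set 'I_N}} := [set [set x; p x] | x : 'I_N].

Lemma Mp_at N (p : 'I_N -> 'I_N) v : isinv p -> [set e in Mp p | v \in e] = [set [set v; p v]].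
Proof.
case=> h1 h2; apply/setP => e; rewrite !inE.
apply/idP/idP.
  case/andP => /imsetP [x _ ->]; rewrite in_set2 => /orP [/eqP ->//|/eqP ->].
  by rewrite h1 setUC.
move/eqP => ->; rewrite set21 andbT; exact: imset_f.
Qed.

Lemma Mp_pm N (p : 'I_N -> 'I_N) : isinv p -> perfect_matching (Mp p).
Proof.
move=> ip; split.
  move=> e /imsetP [x _ ->]; rewrite /is_edge cards2; case: ip => _ h2.
  by rewrite (eq_sym x) h2.
by move=> v; rewrite Mp_at // cards1.
Qed.

Lemma Mp_sum N (p : 'I_N -> 'I_N) (F : {set 'I_N} -> int) : isinv p ->
  (2 * \sum_(e in Mp p) F e = \sum_x F [set x; p x])%R.
Proof.
move=> ip; rewrite -DC.
  by apply: eq_bigr => x _; rewrite Mp_at // big_set1.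
move=> e /imsetP [x _ ->]; rewrite cards2; case: ip => _ h2.
by rewrite (eq_sym x) h2.
Qed.


Lemma Vs_cnt N (s : 'I_N -> 'I_N -> int) (b : int) (p : 'I_N -> 'I_N) :
  sgn_ok s -> isinv p -> (b = 1 \/ b = -1)%R ->
  (Vs s p = b * N%:R - 2 * b * (negc (fun x y => s x y == (- b)%R) p)%:R)%R.
Proof.
move=> hs [_ h2] hb.
rewrite /Vs /negc -sumb_card natr_sum mulr_sumr.
have -> : (b * N%:R = \sum_(x : 'I_N) b)%R by rewrite sumr_const card_ord mulr_natr.
rewrite -sumrB; apply: eq_bigr => x _.
have hx : x != p x by rewrite eq_sym.
by case: (hs _ _ hx) => ->; case: hb => ->.
Qed.

Lemma row_s N (s : 'I_N -> 'I_N -> int) (x : 'I_N) :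
  sgn_ok s ->
  (\sum_(y in [set y | x != y]) s x y =
   N.-1%:R - 2 * (\sum_y cnt (fun x y => s x y == (-1)%R) x y)%:R)%R.
Proof.
move=> hs.
have -> : (N.-1%:R = \sum_(y : 'I_N) ((x != y : nat)%:R : int))%R.
  rewrite -natr_sum sumb_card.
  have -> : [set y | x != y] = [set~ x] by apply/setP => y; rewrite !inE eq_sym.
  by rewrite cardsC1 card_ord.
rewrite natr_sum mulr_sumr -sumrB big_mkcond; apply: eq_bigr => y _.
rewrite inE /cnt; case: (eqVneq x y) => [->|xy] /=; first by rewrite subr0.
by case: (hs _ _ xy) => ->.
Qed.

Lemma sgn_of n (sigma : {set 'I_(4 * n)} -> int) : is_signing sigma ->
  sgn_ok (fun x y : 'I_(4 * n) => sigma [set x; y]).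
Proof. move=> hs x y xy; apply: hs; by rewrite /is_edge cards2 xy. Qed.

Lemma half n (sigma : {set 'I_(4 * n)} -> int) : (0 < n)%N -> is_signing sigma ->
  (`|sigma_sum sigma (edges_K (4 * n))| < (n ^ 2 + 11 * n + 2)%:Z)%R ->
  (forall p, isinv p -> (5 <= Vs (fun x y => sigma [set x; y]) p)%R) -> False.
Proof.
move=> hn hsig hE H.
set s := fun x y : 'I_(4 * n) => sigma [set x; y].
have hs : sgn_ok s by exact: sgn_of.
set g1 := fun x y : 'I_(4 * n) => s x y == (-1)%R.
have Vn : forall p, isinv p -> Vs s p = ((4 * n)%:R - 2 * (negc g1 p)%:R)%R.
  move=> p ip; rewrite (Vs_cnt (b := 1%R) hs ip); last by left.
  by rewrite !mul1r.
have h4 : ~~ odd (4 * n) by lia.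
have [p0 [ip0 _]] := canon_inv (N := 4 * n) (m := 0) h4 isT (leq0n _).
case: (ltnP n 2) => hn2.
  by have := H p0 ip0; rewrite Vn //; lia.
set k := n - 2.
have hN : 4 * n = 4 * k + 8 by lia.
have hneg : forall p, isinv p -> negc g1 p <= 2 * k + 1.
  by move=> p ip; have := H p ip; rewrite Vn //; lia.
have hg : symg g1 by move=> x y; rewrite /g1 /s setUC.
have hD := EG hN hg hneg.
have e2 := sumE sigma.
have hrow : forall x, (\sum_(y in [set y | x != y]) sigma [set x; y] =
   (4 * n).-1%:R - 2 * (\sum_y cnt g1 x y)%:R)%R.
  by move=> x; exact: (row_s x hs).
rewrite (eq_bigr _ (fun x _ => hrow x)) sumrB sumr_const card_ord -mulr_sumr -natr_sum in e2.
rewrite /sigma_sum in hE.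
move: e2 hE hD; rewrite /Dg.
set S := (\sum_(e in edges_K _) sigma e)%R; set D := (\sum_x \sum_y cnt g1 x y)%N.
move=> e2 hE hD.
rewrite ltr_norml in hE.
move: hE; rewrite -mulr_natr in e2.
nia.
Qed.


Theorem corollary4 (n : nat) (sigma : {set 'I_(4 * n)} -> int) :
  (0 < n)%N ->
  is_signing sigma ->
  (`|sigma_sum sigma (edges_K (4 * n))| < (n ^ 2 + 11 * n + 2)%:Z)%R ->
  exists M : {set {set 'I_(4 * n)}},
    perfect_matching M /\ (`|sigma_sum sigma M| <= 2)%R.
Proof.
move=> hn hsig hE.
set s := fun x y : 'I_(4 * n) => sigma [set x; y].
have hs : sgn_ok s by exact: sgn_of.
have [p1 [ip1 hp1]] : exists p, isinv p /\ (Vs s p <= 4)%R.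
  apply: NNPP => hc; apply: (half hn hsig hE) => p ip.
  case: (boolP (5 <= Vs s p)%R) => // h; exfalso; apply: hc; exists p; split => //.
  move: h; rewrite -ltNge; lia.
pose sigma' := fun e => (- sigma e)%R.
have hsig' : is_signing sigma'.
  move=> e he; rewrite /sigma'; case: (hsig e he) => ->; [right|left]; by rewrite ?opprK.
have hE' : (`|sigma_sum sigma' (edges_K (4 * n))| < (n ^ 2 + 11 * n + 2)%:Z)%R.
  by rewrite /sigma_sum /sigma' sumrN normrN.
have [q [iq hq]] : exists q, isinv q /\ (-4 <= Vs s q)%R.
  apply: NNPP => hc; apply: (half hn hsig' hE') => p ip.
  have -> : Vs (fun x y => sigma' [set x; y]) p = (- Vs s p)%R by rewrite /Vs sumrN.
  case: (boolP (5 <= - Vs s p)%R) => // h; exfalso; apply: hc; exists p; split => //.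
  move: h; rewrite -ltNge; lia.
have [r [ir hr]] : exists r, isinv r /\ (`|Vs s r| <= 4)%R.
  case: (boolP (-4 <= Vs s p1)%R) => h.
    by exists p1; split => //; rewrite ler_norml h.
  apply: (interp hs (leqnn (dis p1 q)) ip1 iq _ hq).
  move: h; rewrite -ltNge; lia.
exists (Mp r); split; first exact: Mp_pm.
have := Mp_sum sigma ir; rewrite /sigma_sum => e.
move: hr; rewrite /Vs /s -e !ler_norml; lia.
Qed.
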